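(* For each integer $n\ge0$ let $P_n(x)=\omega_n^-(x)$ denote the number of square-free words of length $n$ over an alphabet with $x$ letters ($x$ a positive integer). Then there is a polynomial in $x$ of degree $n$ with integer coefficients and leading coefficient $1$ which coincides with $P_n(x)$ for all positive integers $x$. Moreover, for $n>1$, $P_n(x)$ is a multiple of $x(x-1)$, and for $n>3$, $P_n(x)$ is a multiple of $x(x-1)(x-2)$. Explicitly, $P_0=1$, $P_1=x$, $P_2=x(x-1)$, $P_3=x(x-1)^2$, $P_4=x^2(x-1)(x-2)$.
   Context: A square is a nonempty word of the form $uu$; a word is square-free if no contiguous subword (factor) of it, including the word itself, is a square. *)

(* Defs.v *)
From mathcomp Require Import all_boot all_order all_algebra.
Set Implicit Arguments. Unset Strict Implicit. Unset Printing Implicit Defensive.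

Definition is_square (T : eqType) (s : seq T) : bool :=
  [exists u : 'I_(size s).+1,
     (0 < u) && (s == take u s ++ take u s)].

(* A word is square-free if no factor (contiguous subword, including the
   word itself) is a square.  Every factor of w is of the form
   take l (drop i w) with i, l <= size w. *)
Definition squarefree (T : eqType) (w : seq T) : bool :=
  [forall i : 'I_(size w).+1, forall l : 'I_(size w).+1,
     ~~ is_square (take l (drop i w))].

Definition nb_squarefree (n x : nat) : nat :=
  #|[set w : n.-tuple 'I_x | squarefree w]|.

(* Main.v *)
Require Import Defs.
From mathcomp Require Import all_boot all_order all_algebra.
From mathcomp Require Import ring.
Import GRing.Theory.


Lemma is_squareP {T : eqType} (s : seq T) :
  reflect (exists u, (0 < u <= size s)%N /\ s = take u s ++ take u s) (is_square s).
Proof.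
apply: (iffP existsP) => [[u /andP[u0 /eqP e]]|[u [/andP[u0 us] e]]].
  by exists (val u); rewrite u0 -ltnS ltn_ord.
by exists (Ordinal (us : (u < (size s).+1)%N)); rewrite /= u0 -e eqxx.
Qed.

Lemma not_square_nil {T : eqType} : ~~ is_square ([::] : seq T).
Proof. by apply/is_squareP => -[u [/andP[u0 us] _]]; move: us; rewrite leqn0 => /eqP u0'; rewrite u0' in u0. Qed.

Lemma squarefreeP {T : eqType} (s : seq T) :
  reflect (forall i l, ~~ is_square (take l (drop i s))) (squarefree s).
Proof.
apply: (iffP forallP) => [H i l | H i]; last by apply/forallP => l; apply: H.
have [ilt|ige] := leqP i (size s); last first.
  by rewrite drop_oversize ?take_nil ?not_square_nil // ltnW.
have [llt|lge] := leqP l (size s).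
  exact: (forallP (H (Ordinal (ilt : (i < (size s).+1)%N))) (Ordinal (llt : (l < (size s).+1)%N))).
rewrite take_oversize; last by rewrite size_drop (leq_trans (leq_subr _ _)) // ltnW.
have := forallP (H (Ordinal (ilt : (i < (size s).+1)%N))) (Ordinal (leqnn (size s).+1)).
by rewrite /= take_oversize // size_drop leq_subr.
Qed.

Lemma squarefree_take {T : eqType} n (s : seq T) : squarefree s -> squarefree (take n s).
Proof.
move=> /squarefreeP H; apply/squarefreeP => i l.
have [ilt|ige] := leqP i n; last first.
  rewrite drop_oversize ?take_nil ?not_square_nil //.
  by rewrite size_take_min (leq_trans (geq_minl _ _)) // ltnW.
have -> : drop i (take n s) = take (n - i) (drop i s) by rewrite take_drop subnK.
by rewrite -take_min.
Qed.

Lemma squarefree_rcons {T : eqType} (s : seq T) a : squarefree (rcons s a) -> squarefree s.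
Proof. by move=> /(squarefree_take (size s)); rewrite -cats1 take_size_cat. Qed.

Lemma uniq_squarefree {T : eqType} (s : seq T) : uniq s -> squarefree s.
Proof.
move=> us; apply/squarefreeP => i l; apply/is_squareP => -[u [/andP[u0 us'] e]].
have : uniq (take l (drop i s)) by rewrite take_uniq // drop_uniq.
rewrite e cat_uniq => /and3P[_ /hasPn H _].
move: e us'; case: (take u _) H => [|a t] H.
  by move=> ->; rewrite /= leqn0 => /eqP u0'; rewrite u0' in u0.
move: (H a); rewrite mem_head => /(_ isT) /=.
by [].
Qed.

Lemma map_inj_seq (T T' : eqType) (A : {pred T}) (f : T -> T') :
  {in A &, injective f} ->
  forall s s', all (mem A) s -> all (mem A) s' -> map f s = map f s' -> s = s'.
Proof.
move=> fi; elim=> [|a s IH] [|b s'] //= /andP[aA sA] /andP[bA sA'] [eab es].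
by rewrite (fi _ _ aA bA eab) (IH s').
Qed.

Lemma squarefree_map (T T' : eqType) (f : T -> T') (s : seq T) :
  {in s &, injective f} -> squarefree (map f s) = squarefree s.
Proof.
move=> fi; apply/squarefreeP/squarefreeP => H i l; apply: contra (H i l);
  rewrite -map_drop -map_take.
- move=> /is_squareP [u [/andP[u0 us] e]]; apply/is_squareP.
  exists u; rewrite size_map u0 us; split=> //.
  by rewrite -map_take -map_cat -e.
- move=> /is_squareP [u [/andP[u0 us] e]]; apply/is_squareP.
  rewrite size_map in us; exists u; rewrite u0 us; split=> //.
  rewrite -map_take -map_cat in e; apply: (@map_inj_seq _ _ [pred x | x \in s] f fi) e.
    by apply/allP => y /mem_take /mem_drop.
  by apply/allP => y; rewrite mem_cat orbb => /mem_take /mem_take /mem_drop.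
Qed.

Definition sqb (t : seq nat) :=
  has (fun u => (0 < u) && (t == take u t ++ take u t)) (iota 0 (size t).+1).
Definition sfb (s : seq nat) :=
  all (fun i => all (fun l => ~~ sqb (take l (drop i s))) (iota 0 (size s).+1))
      (iota 0 (size s).+1).

Lemma sqbE t : sqb t = is_square t.
Proof.
apply/hasP/is_squareP => [[u]|[u [/andP[u0 us] e]]].
  by rewrite mem_iota /= add0n ltnS => us /andP[u0 /eqP e]; exists u; rewrite u0 us.
by exists u; rewrite ?mem_iota /= ?add0n ?ltnS // u0 -e eqxx.
Qed.

Lemma sfbE s : sfb s = squarefree s.
Proof.
apply/allP/forallP => [H i|H i].
  apply/forallP => l; rewrite -sqbE.
  have mi : val i \in iota 0 (size s).+1 by rewrite mem_iota add0n ltn_ord.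
  have ml : val l \in iota 0 (size s).+1 by rewrite mem_iota add0n ltn_ord.
  have /allP Hl := H (val i) mi.
  exact: Hl (val l) ml.
rewrite mem_iota add0n => /andP[_ ilt]; apply/allP => l; rewrite mem_iota add0n => /andP[_ llt].
rewrite sqbE; exact: (forallP (H (Ordinal ilt)) (Ordinal llt)).
Qed.

Lemma t1 : squarefree [:: 0;1;2;0]%N = true. Proof. by rewrite -sfbE. Qed.
Lemma t2 : squarefree [:: 0;1;0;1]%N = false. Proof. by rewrite -sfbE. Qed.

Local Open Scope ring_scope.

Definition dd (w : seq nat) : seq nat :=
  foldl (fun acc a => if a \in acc then acc else rcons acc a) [::] w.

Lemma dd_rcons_raw w a : dd (rcons w a) = if a \in dd w then dd w else rcons (dd w) a.
Proof. by rewrite /dd foldl_rcons. Qed.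

Lemma mem_dd w : dd w =i w.
Proof.
elim/last_ind: w => [|w a IH] b //; rewrite dd_rcons_raw mem_rcons inE.
case: ifP => ad; last by rewrite mem_rcons inE IH.
by rewrite IH; case: eqP => // ->; rewrite -IH ad.
Qed.

Lemma uniq_dd w : uniq (dd w).
Proof.
elim/last_ind: w => [|w a IH] //; rewrite dd_rcons_raw; case: ifP => ad //.
by rewrite rcons_uniq ad IH.
Qed.

Lemma dd_rcons w a : dd (rcons w a) = if a \in w then dd w else rcons (dd w) a.
Proof. by rewrite dd_rcons_raw mem_dd. Qed.

Definition canon (w : seq nat) := [seq index a (dd w) | a <- w].

Lemma canon_rcons w a : canon (rcons w a) = rcons (canon w) (index a (dd w)).
Proof.
rewrite /canon dd_rcons map_rcons; case: ifP => aw //.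
congr rcons; last by rewrite -cats1 index_cat mem_dd aw /= eqxx addn0 memNindex // mem_dd aw.
by apply/eq_in_map => b bw; rewrite -cats1 index_cat mem_dd bw.
Qed.

Lemma sumr_const_seq (I : Type) (r : seq I) (P : pred I) (c : int) :
  \sum_(i <- r | P i) c = c *+ count P r.
Proof.
elim: r => [|a r IH]; first by rewrite big_nil.
by rewrite big_cons /= IH; case: (P a); rewrite ?mulrS ?add0n.
Qed.

Lemma sum_index (d : seq nat) (x : nat) (G : nat -> int) :
  uniq d -> all (fun a => (a < x)%N) d ->
  \sum_(0 <= a < x) G (index a d) =
  \sum_(0 <= j < size d) G j + (x%:R - (size d)%:R) * G (size d).
Proof.
move=> ud dx.
have pe : perm_eq [seq a <- index_iota 0 x | a \in d] d.
  apply: uniq_perm; first by rewrite filter_uniq // iota_uniq.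
    exact: ud.
  move=> a; rewrite mem_filter mem_index_iota /=.
  by case ad: (a \in d) => //=; rewrite (allP dx).
rewrite (bigID (fun a => a \in d)) /=; congr (_ + _).
  rewrite -big_filter (perm_big _ pe) [LHS](big_nth 0%N) [LHS]big_nat_cond [RHS]big_nat_cond.
  by apply: eq_bigr => i /andP[/andP[_ id] _]; rewrite index_uniq.
rewrite (eq_bigr (fun _ => G (size d))); last by move=> a ad; rewrite memNindex.
rewrite sumr_const_seq -natrB; last first.
  have := uniq_leq_size ud (s2 := index_iota 0 x).
  rewrite /index_iota subn0 size_iota; apply=> a ad; rewrite mem_iota /= (allP dx) //.
rewrite mulr_natl; congr (_ *+ _).
have := count_predC (mem d) (index_iota 0 x).
have -> : count (mem d) (index_iota 0 x) = size d.
  by rewrite -(perm_size pe) size_filter.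
rewrite /index_iota subn0 size_iota => h.
by rewrite -[in RHS]h addKn.
Qed.

Fixpoint Q (m : nat) (c : seq nat) (k : nat) : {poly int} :=
  if m is m'.+1 then
    \sum_(0 <= j < k) Q m' (rcons c j) k + ('X - (k%:R)%:P) * Q m' (rcons c k) k.+1
  else (squarefree c)%:R.

Lemma Q0 c k : Q 0 c k = (squarefree c)%:R. Proof. by []. Qed.
Lemma QS m c k : Q m.+1 c k =
  \sum_(0 <= j < k) Q m (rcons c j) k + ('X - (k%:R)%:P) * Q m (rcons c k) k.+1.
Proof. by []. Qed.

Lemma sum_tupleS (x m : nat) (F : m.+1.-tuple 'I_x -> int) :
  \sum_(t : m.+1.-tuple 'I_x) F t =
  \sum_(a : 'I_x) \sum_(t : m.-tuple 'I_x) F [tuple of a :: t].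
Proof.
rewrite pair_big /=.
rewrite (reindex (fun p : 'I_x * m.-tuple 'I_x => [tuple of p.1 :: p.2])) //=.
exists (fun t : m.+1.-tuple 'I_x => (thead t, [tuple of behead t])).
  by move=> [a t] _; rewrite theadE; congr pair; apply: val_inj.
by move=> t _; rewrite -tuple_eta.
Qed.

Lemma key (x m : nat) : forall w : seq nat, all (fun a => (a < x)%N) w ->
  (Q m (canon w) (size (dd w))).[x%:Z] =
  \sum_(t : m.-tuple 'I_x) ((squarefree (w ++ map val t) : nat)%:R : int).
Proof.
elim: m => [|m IH] w wx.
  rewrite (eq_bigr (fun _ => ((squarefree w : nat)%:R : int))); last first.
    by move=> t _; rewrite (tuple0 t) /= cats0.
  rewrite sumr_const card_tuple expn0 mulr1n Q0 hornerMn hornerE /canon squarefree_map //.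
  by move=> a b aw bw; apply: (index_inj 0%N); rewrite ?mem_dd.
rewrite sum_tupleS.
under eq_bigr => a _.
  rewrite (eq_bigr (fun t : m.-tuple 'I_x =>
     ((squarefree (rcons w (val a) ++ map val t) : nat)%:R : int))); last first.
    by move=> t _; rewrite cat_rcons.
  rewrite -IH; last by rewrite all_rcons ltn_ord.
  rewrite canon_rcons dd_rcons.
  over.
set d := dd w; set c := canon w.
cbv beta.
pose G j := (Q m (rcons c j) (if j == size d then (size d).+1 else size d)).[x%:Z].
rewrite (eq_bigr (fun a : 'I_x => G (index (val a) d))); last first.
  move=> a _; rewrite /G; case: ifP => aw.
    by rewrite ltn_eqF // index_mem mem_dd.
  by rewrite size_rcons memNindex ?mem_dd ?aw // eqxx.
rewrite -(big_mkord xpredT (fun a => G (index a d))) sum_index; last first.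
  by apply/allP => a; rewrite mem_dd => /(allP wx).
  exact: uniq_dd.
rewrite QS hornerD hornerM hornerXsubC horner_sum -natz.
congr (_ + _).
  rewrite big_nat_cond [RHS]big_nat_cond; apply: eq_bigr => j /andP[/andP[_ jd] _].
  by rewrite /G ltn_eqF // natz.
rewrite /G eqxx natz.
by congr (_ * _).
Qed.

Lemma Q_nsf m : forall c k, ~~ squarefree c -> Q m c k = 0.
Proof.
elim: m => [|m IH] c k ns; first by rewrite Q0 (negbTE ns).
have ns' j : ~~ squarefree (rcons c j) by apply: contra ns; apply: squarefree_rcons.
rewrite QS IH // mulr0 addr0 big1 // => j _; exact: IH.
Qed.

Lemma Q_coef m : forall c k,
  (forall j, (m < j)%N -> (Q m c k)`_j = 0) /\
  (Q m c k)`_m = (squarefree (c ++ iota k m) : nat)%:R.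
Proof.
elim: m => [|m IH] c k.
  rewrite Q0 cats0; split; last by rewrite coefMn coef1 /=; case: squarefree.
  by case=> // j _; rewrite coefMn coef1 /= mul0rn.
have [H1 H2] := IH (rcons c k) k.+1.
have Hs j : (m < j)%N -> (\sum_(0 <= i < k) Q m (rcons c i) k)`_j = 0.
  move=> mj; rewrite coef_sum big1 // => i _; have [H _] := IH (rcons c i) k; exact: H.
rewrite QS mulrBl; split.
  move=> j mj; rewrite coefD coefB coefXM coefCM Hs ?(ltnW mj) //.
  rewrite (H1 j) ?(ltn_trans _ mj) // mulr0 subr0 add0r.
  by case: j mj => // j mj /=; rewrite H1.
rewrite coefD coefB coefXM coefCM Hs // (H1 m.+1) // mulr0 subr0 add0r /= H2.
by rewrite cat_rcons.
Qed.

Lemma Q_size m c k : (size (Q m c k) <= m.+1)%N.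
Proof. by apply/leq_sizeP => j; case: (Q_coef m c k) => H _; apply: H. Qed.

Lemma sum0 (F : nat -> {poly int}) : \sum_(0 <= j < 0) F j = 0.
Proof. by rewrite big_geq. Qed.
Lemma sum1 (F : nat -> {poly int}) : \sum_(0 <= j < 1) F j = F 0%N.
Proof. by rewrite big_nat1. Qed.
Lemma sum2 (F : nat -> {poly int}) : \sum_(0 <= j < 2) F j = F 0%N + F 1%N.
Proof. by rewrite big_ltn // big_nat1. Qed.
Lemma sum3 (F : nat -> {poly int}) : \sum_(0 <= j < 3) F j = F 0%N + F 1%N + F 2%N.
Proof. by rewrite big_ltn // big_ltn // big_nat1 addrA. Qed.

Lemma Qz m c k : squarefree c = false -> Q m c k = 0.
Proof. by move=> h; apply: Q_nsf; rewrite h. Qed.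
Lemma Q01 c k : squarefree c = true -> Q 0 c k = 1.
Proof. by move=> h; rewrite Q0 h. Qed.

Lemma P_eval n x : (Q n [::] 0).[x%:Z] = (nb_squarefree n x)%:Z.
Proof.
have K : (Q n [::] 0).[x%:Z] = \sum_(t : n.-tuple 'I_x)
    ((squarefree ([::] ++ map val t) : nat)%:R : int) := key x n [::] isT.
rewrite K /nb_squarefree cardsE -sum1_card -natz natr_sum.
rewrite [RHS]big_mkcond; apply: eq_bigr => t _.
rewrite squarefree_map; last by apply: in2W; apply: val_inj.
have E : (t \in [pred u : n.-tuple 'I_x | squarefree u]) = squarefree t by [].
case h: (squarefree t).
  by rewrite (ifT _ _ (h : t \in [pred u : n.-tuple 'I_x | squarefree u])).
by rewrite (ifF _ _ (h : (t \in [pred u : n.-tuple 'I_x | squarefree u]) = false)).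
Qed.

Theorem proposition3 :
  exists P : nat -> {poly int},
    (forall n : nat,
        size (P n) = n.+1 /\ lead_coef (P n) = 1 /\
        (forall x : nat, (0 < x)%N -> (P n).[x%:Z] = (nb_squarefree n x)%:Z)) /\
    (forall n : nat, (1 < n)%N ->
        exists q : {poly int}, P n = 'X * ('X - 1) * q) /\
    (forall n : nat, (3 < n)%N ->
        exists q : {poly int}, P n = 'X * ('X - 1) * ('X - 2%:P) * q) /\
    P 0%N = 1 /\
    P 1%N = 'X /\
    P 2%N = 'X * ('X - 1) /\
    P 3%N = 'X * ('X - 1) ^+ 2 /\
    P 4%N = 'X ^+ 2 * ('X - 1) * ('X - 2%:P).
Proof.
exists (fun n => Q n [::] 0).
have top n : (Q n [::] 0)`_n = 1.
  have [_ ->] := Q_coef n [::] 0.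
  by rewrite uniq_squarefree //= iota_uniq.
have sz n : size (Q n [::] 0) = n.+1.
  apply/eqP; rewrite eqn_leq Q_size /= ltnNge; apply/negP => /leq_sizeP /(_ n (leqnn n)).
  by rewrite top.
split.
  move=> n; split; first exact: sz.
  split; first by rewrite lead_coefE sz top.
  by move=> x _; apply: P_eval.
split.
  case=> [|[|m]] // _.
  exists (Q m [:: 0; 1]%N 2).
  rewrite QS sum0 QS sum1 (Qz _ [:: 0; 0]%N); last by rewrite -sfbE.
  rewrite /=. ring.
split.
  case=> [|[|[|[|m]]]] // _.
  exists (Q m.+1 [:: 0; 1; 2]%N 3 + Q m [:: 0; 1; 0; 2]%N 3).
  rewrite QS sum0 QS sum1 (Qz _ [:: 0; 0]%N); last by rewrite -sfbE.
  rewrite (QS _ [:: 0; 1]%N) sum2 (Qz _ [:: 0; 1; 1]%N); last by rewrite -sfbE.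
  rewrite (QS _ [:: 0; 1; 0]%N) sum2 (Qz _ [:: 0; 1; 0; 0]%N); last by rewrite -sfbE.
  rewrite (Qz _ [:: 0; 1; 0; 1]%N); last by rewrite -sfbE.
  rewrite /=. ring.
split; first by rewrite Q01 // -sfbE.
split.
  by rewrite QS sum0 (Q01 [:: 0]%N); [rewrite /=; ring | rewrite -sfbE].
split.
  rewrite QS sum0 QS sum1 (Qz _ [:: 0; 0]%N); last by rewrite -sfbE.
  by rewrite (Q01 [:: 0; 1]%N); [rewrite /=; ring | rewrite -sfbE].
split.
  rewrite QS sum0 QS sum1 (Qz _ [:: 0; 0]%N); last by rewrite -sfbE.
  rewrite (QS _ [:: 0; 1]%N) sum2 (Qz _ [:: 0; 1; 1]%N); last by rewrite -sfbE.
  rewrite (Q01 [:: 0; 1; 0]%N); last by rewrite -sfbE.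
  rewrite (Q01 [:: 0; 1; 2]%N); last by rewrite -sfbE.
  rewrite /=. ring.
rewrite QS sum0 QS sum1 (Qz _ [:: 0; 0]%N); last by rewrite -sfbE.
rewrite (QS _ [:: 0; 1]%N) sum2 (Qz _ [:: 0; 1; 1]%N); last by rewrite -sfbE.
rewrite (QS _ [:: 0; 1; 0]%N) sum2 (Qz _ [:: 0; 1; 0; 0]%N); last by rewrite -sfbE.
rewrite (Qz _ [:: 0; 1; 0; 1]%N); last by rewrite -sfbE.
rewrite (Q01 [:: 0; 1; 0; 2]%N); last by rewrite -sfbE.
rewrite (QS _ [:: 0; 1; 2]%N) sum3 (Qz _ [:: 0; 1; 2; 2]%N); last by rewrite -sfbE.
rewrite (Q01 [:: 0; 1; 2; 0]%N); last by rewrite -sfbE.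
rewrite (Q01 [:: 0; 1; 2; 1]%N); last by rewrite -sfbE.
rewrite (Q01 [:: 0; 1; 2; 3]%N); last by rewrite -sfbE.
rewrite /=. ring.
Qed.
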